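(* No natural number occurs three or more times in the sequence $(a(n))_{n\ge 0}$; that is, there do not exist $x<y<z$ in $\mathbb{N}$ with $a(x)=a(y)=a(z)$.
   Context: $\mathbb{N}=\{0,1,2,\ldots\}$. Let $(F_n)_{n\ge 0}$ be the Fibonacci numbers: $F_0=0$, $F_1=1$, $F_n=F_{n-1}+F_{n-2}$ for $n\ge 2$. Define $(a(n))_{n\ge 0}$ (OEIS A105774) by $a(0)=0$, $a(1)=1$, and for $n\ge 2$, $a(n)=F_{j+1}-a(n-F_j)$, where $j\ge 2$ is the unique index with $F_j<n\le F_{j+1}$. *)

(* Defs.v *)
From Stdlib Require Import Arith List.

Fixpoint fib (n : nat) : nat :=
  match n with
  | 0 => 0
  | S m => match m with
           | 0 => 1
           | S k => fib m + fib k
           end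
  end.

Fixpoint fib_index_from (fuel j n : nat) : nat :=
  match fuel with
  | 0 => j
  | S f => if n <=? fib (S j) then j else fib_index_from f (S j) n
  end.

(* For n >= 2: the unique j >= 2 with fib j < n <= fib (j+1)
   (the least j >= 2 with n <= fib (j+1); fuel n suffices since fib (j+1) >= j). *)
Definition fib_index (n : nat) : nat := fib_index_from n 2 n.

Fixpoint a_fuel (fuel n : nat) : nat :=
  match fuel with
  | 0 => 0
  | S f =>
      match n with
      | 0 => 0
      | 1 => 1
      | _ => let j := fib_index n in fib (S j) - a_fuel f (n - fib j)
      end
  end.

(* OEIS A105774. Fuel n+1 suffices since n - F_j < n for n >= 2. *)
Definition a (n : nat) : nat := a_fuel (S n) n.

Example a_first_values :
  map a (seq 0 14) = 0 :: 1 :: 1 :: 2 :: 4 :: 4 :: 7 :: 7 :: 6 :: 12 :: 12 :: 11 :: 9 :: 9 :: nil.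
Proof. vm_compute. reflexivity. Qed.

(* Main.v *)
Require Import Defs.
From Stdlib Require Import Arith Lia List.

Lemma fibSS k : fib (S (S k)) = fib (S k) + fib k.
Proof. reflexivity. Qed.

Lemma fib_le_S n : fib n <= fib (S n).
Proof. destruct n. simpl; lia. rewrite fibSS; lia. Qed.

Lemma fib_mono m n : m <= n -> fib m <= fib n.
Proof.
  induction 1. lia. pose proof (fib_le_S m0). lia.
Qed.

Lemma fib_pos n : 1 <= n -> 1 <= fib n.
Proof. intros H. pose proof (fib_mono 1 n H). simpl in *. lia. Qed.

Lemma fib_ge n : n <= fib (S n).
Proof.
  induction n as [n IH] using lt_wf_ind.
  destruct n as [|[|k]]; try (simpl; lia).
  rewrite fibSS. pose proof (IH (S k) ltac:(lia)). pose proof (fib_pos (S k) ltac:(lia)). lia.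
Qed.

Lemma fib_index_from_spec fuel : forall j n, fib j < n -> n <= fib (S (j + fuel)) ->
  let j' := fib_index_from fuel j n in j <= j' /\ fib j' < n /\ n <= fib (S j').
Proof.
  induction fuel; intros j n H1 H2; cbn [fib_index_from].
  - rewrite Nat.add_0_r in H2. repeat split; lia.
  - destruct (Nat.leb_spec n (fib (S j))).
    + repeat split; lia.
    + destruct (IHfuel (S j) n) as [A [B C]]; try lia.
      rewrite Nat.add_succ_r in H2. exact H2.
Qed.

Lemma fib_index_spec n : 2 <= n ->
  2 <= fib_index n /\ fib (fib_index n) < n /\ n <= fib (S (fib_index n)).
Proof.
  intros H. unfold fib_index.
  apply fib_index_from_spec. simpl; lia.
  pose proof (fib_ge (2 + n)). pose proof (fib_mono (S (2+n)) (S (2 + n))). lia.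
Qed.

Lemma a_fuel_eq f : forall g n, n < f -> n < g -> a_fuel f n = a_fuel g n.
Proof.
  induction f; intros g n H1 H2. lia.
  destruct g. lia.
  destruct n as [|[|n]]; cbn [a_fuel]; try reflexivity. cbv zeta.
  destruct (fib_index_spec (S (S n)) ltac:(lia)) as [A [B C]].
  pose proof (fib_pos (fib_index (S (S n))) ltac:(lia)).
  f_equal. apply IHf; lia.
Qed.

Lemma a_fuel_S f n : 2 <= n ->
  a_fuel (S f) n = fib (S (fib_index n)) - a_fuel f (n - fib (fib_index n)).
Proof. intros H. destruct n as [|[|n]]; [lia|lia|reflexivity]. Qed.

Lemma a_eq n : 2 <= n -> exists j, 2 <= j /\ fib j < n /\ n <= fib (S j) /\
  a n = fib (S j) - a (n - fib j).
Proof.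
  intros H. destruct (fib_index_spec n H) as [A [B C]].
  exists (fib_index n). split; [lia|split;[lia|split;[lia|]]].
  pose proof (fib_pos (fib_index n) ltac:(lia)).
  unfold a at 1. destruct n as [|[|n]]; try lia.
  rewrite a_fuel_S by lia. f_equal. unfold a. apply a_fuel_eq; lia.
Qed.

Lemma a0 : a 0 = 0. Proof. reflexivity. Qed.
Lemma a1 : a 1 = 1. Proof. reflexivity. Qed.

Lemma range n : (1 <= n -> 1 <= a n)
  /\ (forall j, 2 <= j -> fib j < n -> n <= fib (S j) -> a n < fib (S j))
  /\ (forall j, 3 <= j -> fib j < n -> n <= fib (S j) -> fib j <= a n).
Proof.
  induction n as [n IH] using lt_wf_ind.
  destruct (Nat.lt_ge_cases n 2) as [Hn|Hn].
  - destruct n as [|[|]]; try lia.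
    + rewrite a0. split; [lia|]. split; intros j Hj Hf; pose proof (fib_pos j ltac:(lia)); lia.
    + rewrite a1. split; [lia|]. split; intros j Hj Hf; pose proof (fib_mono 2 j ltac:(lia)); simpl in *; lia.
  - destruct (a_eq n Hn) as [j [Hj [B [C D]]]].
    assert (Huniq : forall i, 2 <= i -> fib i < n -> n <= fib (S i) -> i = j).
    { intros i Hi B' C'. destruct (Nat.lt_trichotomy i j) as [L|[L|L]]; auto.
      - pose proof (fib_mono (S i) j L). lia.
      - pose proof (fib_mono (S j) i L). lia. }
    pose proof (fib_pos j ltac:(lia)).
    pose proof (fib_mono 2 j Hj). simpl in H0.
    set (m := n - fib j) in D.
    assert (Hm1 : 1 <= m) by lia.
    assert (Hmn : m < n) by lia.
    destruct (IH m Hmn) as [I1 [I2 I3]].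
    assert (Hmle : m <= fib (S j) - fib j) by lia.
    destruct j as [|[|j]]; try lia.
    rewrite fibSS in Hmle. pose proof (fibSS (S j)) as Hf3. pose proof (fib_pos (S j) ltac:(lia)) as Hfp.
    replace (fib (S (S j)) + fib (S j) - fib (S (S j))) with (fib (S j)) in Hmle by lia.
    assert (Ham : a m <= fib (S j)).
    { destruct (Nat.lt_ge_cases m 2) as [Hm2|Hm2].
      - assert (m = 1) by lia. subst m. rewrite H1, a1. apply fib_pos; lia.
      - destruct (fib_index_spec m Hm2) as [P [Q R]].
        pose proof (I2 _ P Q R).
        assert (fib_index m < S j).
        { destruct (Nat.lt_ge_cases (fib_index m) (S j)) as [LL|LL]; auto.
          pose proof (fib_mono (S j) (fib_index m) LL). lia. }
        pose proof (fib_mono (S (fib_index m)) (S j) ltac:(lia)). lia. }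
    split; [|split].
    + intros _. rewrite D. pose proof (I1 Hm1). lia.
    + intros i Hi B' C'. rewrite (Huniq i Hi B' C'). rewrite D. pose proof (I1 Hm1). lia.
    + intros i Hi B' C'. rewrite (Huniq i ltac:(lia) B' C'). rewrite D.
      lia.
Qed.

Lemma a2 : a 2 = 1. Proof. reflexivity. Qed.

Lemma block n : 3 <= n -> exists j, 3 <= j /\ fib j < n /\ n <= fib (S j) /\
  a n = fib (S j) - a (n - fib j) /\ fib j <= a n /\ a n < fib (S j).
Proof.
  intros H. destruct (a_eq n ltac:(lia)) as [j [Hj [B [C D]]]].
  assert (3 <= j).
  { destruct (Nat.eq_dec j 2); [subst; simpl in C; lia | lia]. }
  destruct (range n) as [_ [R2 R3]].
  exists j. repeat split; auto; lia.
Qed.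

Lemma same_block i j v : fib i <= v -> v < fib (S i) -> fib j <= v -> v < fib (S j) -> i = j.
Proof.
  intros. destruct (Nat.lt_trichotomy i j) as [L|[L|L]]; auto.
  - pose proof (fib_mono (S i) j L). lia.
  - pose proof (fib_mono (S j) i L). lia.
Qed.

Theorem proposition1 :
  ~ (exists x y z : nat, x < y /\ y < z /\ a x = a y /\ a y = a z).
Proof.
  intros [x [y [z H]]]. revert x y H.
  induction z as [z IH] using lt_wf_ind. intros x y [Hxy [Hyz [E1 E2]]].
  destruct (range y) as [Ry _].
  destruct x as [|[|[|x]]].
  - rewrite a0 in E1. pose proof (Ry ltac:(lia)). lia.
  - destruct (block z ltac:(lia)) as [j [Hj [_ [_ [_ [L _]]]]]].
    pose proof (fib_mono 3 j Hj). simpl in *. rewrite a1 in E1. lia.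
  - destruct (block z ltac:(lia)) as [j [Hj [_ [_ [_ [L _]]]]]].
    pose proof (fib_mono 3 j Hj). simpl in *. rewrite a2 in E1. lia.
  - destruct (block (S (S (S x))) ltac:(lia)) as [jx [Hjx [Bx [Cx [Dx [Lx Ux]]]]]].
    destruct (block y ltac:(lia)) as [jy [Hjy [By [Cy [Dy [Ly Uy]]]]]].
    destruct (block z ltac:(lia)) as [jz [Hjz [Bz [Cz [Dz [Lz Uz]]]]]].
    assert (jx = jy) by (apply (same_block _ _ (a y)); lia). subst jy.
    assert (jx = jz) by (apply (same_block _ _ (a y)); lia). subst jz.
    pose proof (fib_pos jx ltac:(lia)).
    apply (IH (z - fib jx) ltac:(lia) (S (S (S x)) - fib jx) (y - fib jx)).
    repeat split; lia.
Qed.
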